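(* Let $\tau\ge1$ be an integer and $H=(\mathcal{V},\mathcal{E})$ a hypergraph. Then $H$ is inherently $\tau$-connected if and only if, for every strict total order $\prec$ on $\mathcal{V}$, the multigraph $G_{H,\prec}$ contains $\tau$ edge-disjoint spanning trees.
   Context: Hypergraphs may have repeated hyperedges; each hyperedge is a nonempty subset of $\mathcal{V}$. A multigraph $G=(\mathcal{V},\mathcal{E}_M)$ is induced by $H$ if its edge multiset decomposes as a disjoint union of edge sets of simple graphs $G_e=(e,E_e)$, $e\in\mathcal{E}$, each $G_e$ a connected simple graph on vertex set $e$. $H$ is inherently $\tau$-connected if every multigraph induced by $H$ contains at least $\tau$ edge-disjoint spanning trees. For a strict total order $\prec$ on $\mathcal{V}$, $G_{H,\prec}$ is the induced multigraph in which, for each hyperedge $e=\{v_{i_1},\dots,v_{i_k}\}$ listed so that $v_{i_1}\prec\cdots\prec v_{i_k}$, $G_e$ is the path with edges $\{v_{i_1},v_{i_2}\},\{v_{i_2},v_{i_3}\},\dots,\{v_{i_{k-1}},v_{i_k}\}$. *)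

(* Defs.v *)
From mathcomp Require Import all_boot.
Set Implicit Arguments. Unset Strict Implicit. Unset Printing Implicit Defensive.

Section HyperDefs.
Variable V : finType.

(* An (undirected, loopless) edge is a 2-element subset of V.
   A multigraph on V is a finite multiset (seq) of edges.
   A hypergraph on V is a seq of hyperedges (repetitions allowed). *)
Definition is_edge (f : {set V}) : bool := #|f| == 2.

Definition gadj (E : seq {set V}) : rel V :=
  fun x y => (x != y) && ([set x; y] \in E).

Definition connected_on (S : {set V}) (E : seq {set V}) : Prop :=
  forall x y, x \in S -> y \in S -> connect (gadj E) x y.

Definition spanning_tree (T : seq {set V}) : Prop :=
  [/\ all is_edge T, connected_on setT T &
      forall i, i < size T -> ~ connected_on setT (take i T ++ drop i.+1 T)].

(* G contains tau edge-disjoint spanning trees: tau spanning trees whose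
   multiset union is a sub-multiset of the edge multiset of G *)
Definition has_disjoint_spanning_trees (tau : nat) (G : seq {set V}) : Prop :=
  exists Ts : seq (seq {set V}),
    [/\ size Ts = tau, forall T, T \in Ts -> spanning_tree T &
        exists rest, perm_eq G (flatten Ts ++ rest)].

Definition conn_simple_graph_on (e : {set V}) (F : seq {set V}) : Prop :=
  [/\ uniq F, all (fun f => is_edge f && (f \subset e)) F & connected_on e F].

Definition induced_by (E : seq {set V}) (G : seq {set V}) : Prop :=
  exists Es : seq (seq {set V}),
    [/\ size Es = size E,
        forall i, i < size E -> conn_simple_graph_on (nth set0 E i) (nth [::] Es i) &
        perm_eq G (flatten Es)].

Definition inherently_connected (tau : nat) (E : seq {set V}) : Prop :=
  forall G, induced_by E G -> has_disjoint_spanning_trees tau G.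

Definition strict_total_order (r : rel V) : Prop :=
  [/\ irreflexive r, transitive r & forall x y, x != y -> r x y || r y x].

Definition path_edges (s : seq V) : seq {set V} :=
  [seq [set p.1; p.2] | p <- zip s (behead s)].

Definition G_order (E : seq {set V}) (r : rel V) : seq {set V} :=
  flatten [seq path_edges (sort r (enum e)) | e : {set V} <- E].

End HyperDefs.

(* Main.v *)
Require Import Defs.
From mathcomp Require Import all_boot zify.
From Stdlib Require Import Classical ClassicalEpsilon.
Set Implicit Arguments. Unset Strict Implicit. Unset Printing Implicit Defensive.

Section Conn.
Variable V : finType.
Implicit Types (L M : seq {set V}) (x y u v w : V).

Notation conn L := (connect (gadj L)).

Lemma gadj_sym L : symmetric (gadj L).
Proof. by move=> x y; rewrite /gadj eq_sym setUC. Qed.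

Lemma conn_sym L : connect_sym (gadj L).
Proof. exact/sym_connect_sym/gadj_sym. Qed.

Lemma conn_edge L x y : x != y -> [set x; y] \in L -> conn L x y.
Proof. by move=> nxy h; apply: connect1; rewrite /gadj nxy h. Qed.

Lemma conn_mono L M : {subset L <= M} -> forall x y, conn L x y -> conn M x y.
Proof.
move=> sLM; apply: connect_sub => x y /andP[nxy h].
by apply: conn_edge => //; apply: sLM.
Qed.

Lemma conn_eqmem L M : L =i M -> conn L =2 conn M.
Proof.
move=> eLM x y; apply/idP/idP; apply: conn_mono => z; by rewrite eLM.
Qed.

Lemma set2_eq x y u v : [set x; y] = [set u; v] ->
  (x = u /\ y = v) \/ (x = v /\ y = u).
Proof.
move=> e.
have hx : x \in [set u; v] by rewrite -e !inE eqxx.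
have hy : y \in [set x; y] by rewrite !inE eqxx orbT.
have hu : u \in [set x; y] by rewrite e !inE eqxx.
have hv : v \in [set x; y] by rewrite e !inE eqxx orbT.
move: hx hu hv; rewrite !inE => /orP[]/eqP -> /orP[]/eqP hu /orP[]/eqP hv; subst; auto.
- have : y \in [set u; u] by rewrite -e !inE eqxx orbT.
  by rewrite !inE orbb => /eqP ->; auto.
- have : y \in [set v; v] by rewrite -e !inE eqxx orbT.
  by rewrite !inE orbb => /eqP ->; auto.
Qed.

Lemma connect_closed (e : rel V) (Q : V -> Prop) x y :
  Q x -> (forall z t, Q z -> e z t -> Q t) -> connect e x y -> Q y.
Proof.
move=> Qx hQ /connectP[p pth ->]; elim: p x Qx pth => //= z p IH x Qx /andP[exz pz].
exact: (IH z (hQ _ _ Qx exz)).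
Qed.

Lemma conn_cons_split L u v a b : u != v ->
  conn ([set u; v] :: L) a b ->
  [\/ conn L a b, conn L a u /\ conn L v b | conn L a v /\ conn L u b].
Proof.
move=> nuv; apply: (connect_closed (Q := fun b => [\/ conn L a b, conn L a u /\ conn L v b | conn L a v /\ conn L u b])).
  by apply: Or31; exact: connect0.
move=> z t Qz /andP[nzt]; rewrite inE => /orP[/eqP e|h].
  have [[? ?]|[? ?]] := set2_eq e; subst z t.
    case: Qz => [h|[h1 h2]|[h1 h2]].
    - by apply: Or32; split => //; exact: connect0.
    - by apply: Or32; split => //; exact: connect0.
    - by apply: Or31.
  case: Qz => [h|[h1 h2]|[h1 h2]].
  - by apply: Or33; split => //; exact: connect0.
  - by apply: Or31.
  - by apply: Or33; split => //; exact: connect0.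
have et : conn L z t by apply: conn_edge.
case: Qz => [h1|[h1 h2]|[h1 h2]].
- by apply: Or31; apply: connect_trans et.
- by apply: Or32; split => //; apply: connect_trans et.
- by apply: Or33; split => //; apply: connect_trans et.
Qed.

Definition cls (R : rel V) : {set {set V}} := [set [set y | R x y] | x in V].
Definition cc L := #|cls (conn L)|.

Lemma cls_eq (R1 R2 : rel V) : R1 =2 R2 -> cls R1 = cls R2.
Proof.
move=> e; apply: eq_imset => x; apply/setP => y; by rewrite !inE e.
Qed.

Lemma cc_eq L M : conn L =2 conn M -> cc L = cc M.
Proof. by move=> e; rewrite /cc (cls_eq e). Qed.

Lemma cc_eqmem L M : L =i M -> cc L = cc M.
Proof. by move=> e; apply: cc_eq; apply: conn_eqmem. Qed.

Definition phi L (C : {set V}) : {set V} := [set y | [exists x in C, conn L x y]].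

Lemma phi_class L M x : (forall a b, conn M a b -> conn L a b) ->
  phi L [set y | conn M x y] = [set y | conn L x y].
Proof.
move=> sub; apply/setP => y; rewrite !inE; apply/existsP/idP.
  by case=> z /andP[]; rewrite inE => /sub h1 h2; apply: connect_trans h1 h2.
by move=> h; exists x; rewrite inE connect0.
Qed.

Lemma cls_phi L M : (forall a b, conn M a b -> conn L a b) ->
  cls (conn L) = phi L @: cls (conn M).
Proof.
move=> sub; rewrite /cls -imset_comp; apply: eq_imset => x /=.
by rewrite phi_class.
Qed.

Lemma cc_sub L M : (forall a b, conn M a b -> conn L a b) -> cc L <= cc M.
Proof. by move=> sub; rewrite /cc (cls_phi sub) leq_imset_card. Qed.

Lemma class_eq L a b : conn L a b -> [set y | conn L a y] = [set y | conn L b y].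
Proof.
move=> hab; apply/setP => z; rewrite !inE; apply/idP/idP => h.
  by rewrite conn_sym in hab; apply: connect_trans hab h.
by apply: connect_trans hab h.
Qed.

Lemma cc_merge L u v : u != v -> ~~ conn L u v ->
  cc ([set u; v] :: L) + 1 = cc L.
Proof.
move=> nuv nc.
set M := [set u; v] :: L.
have sub : forall a b, conn L a b -> conn M a b.
  by apply: conn_mono => z; rewrite inE orbC => ->.
have hMuv : conn M u v by apply: conn_edge => //; rewrite !inE eqxx.
have ncls : [set y | conn L u y] != [set y | conn L v y].
  apply/negP => /eqP/setP/(_ u); rewrite !inE connect0 => /esym hvu.
  by rewrite conn_sym hvu in nc.
have cM : cls (conn M) = phi M @: (cls (conn L) :\ [set y | conn L v y]).
  apply/eqP; rewrite eqEsubset; apply/andP; split; last first.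
    rewrite (cls_phi sub); apply: imsetS; exact: subD1set.
  apply/subsetP => C /imsetP[x _ ->].
  case: (boolP (conn L v x)) => hvx.
    apply/imsetP; exists [set y | conn L u y].
      by rewrite !inE ncls /=; apply: imset_f.
    rewrite phi_class //; apply/setP => y; rewrite !inE.
    have hMvx : conn M v x by apply: sub.
    apply/idP/idP => h.
      exact: connect_trans (connect_trans hMuv hMvx) h.
    apply: connect_trans _ h; rewrite conn_sym; exact: connect_trans hMuv hMvx.
  apply/imsetP; exists [set y | conn L x y].
    rewrite !inE; apply/andP; split; last by apply: imset_f.
    apply/negP => /eqP/setP/(_ x); rewrite !inE connect0 => /esym.
    by rewrite (negbTE hvx).
  by rewrite phi_class.
rewrite /cc cM card_in_imset; last first.
  move=> C1 C2 /setD1P[n1 /imsetP[a _ ea]] /setD1P[n2 /imsetP[b _ eb]].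
  rewrite ea eb !phi_class // => /setP/(_ b); rewrite !inE connect0 => hab.
  case: (conn_cons_split nuv hab) => [h|[h1 h2]|[h1 h2]].
  - by rewrite (class_eq h).
  - by move: n2; rewrite eb -(class_eq h2) eqxx.
  - by move: n1; rewrite ea (class_eq h1) eqxx.
rewrite [in RHS](cardsD1 [set y | conn L v y]) imset_f // addnC.
by [].
Qed.

Lemma gadj_cons_nonedge L f : (forall x y, x != y -> f != [set x; y]) ->
  gadj (f :: L) =2 gadj L.
Proof.
move=> hf x y; rewrite /gadj inE; case: (boolP (x != y)) => //= nxy.
by rewrite eq_sym (negbTE (hf _ _ nxy)).
Qed.

Lemma cc_same L u v : conn L u v -> cc ([set u; v] :: L) = cc L.
Proof.
move=> huv; apply: cc_eq => a b.
case: (eqVneq u v) => [<-|nuv].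
  apply: eq_connect; apply: gadj_cons_nonedge => x y nxy; apply/eqP => e.
  have hx : x \in [set u; u] by rewrite e !inE eqxx.
  have hy : y \in [set u; u] by rewrite e !inE eqxx orbT.
  by move: hx hy nxy; rewrite !inE !orbb => /eqP -> /eqP ->; rewrite eqxx.
apply/idP/idP; last first.
  by apply: conn_mono => z; rewrite inE orbC => ->.
move/(conn_cons_split nuv) => [//|[h1 h2]|[h1 h2]].
- by apply: connect_trans h1 (connect_trans huv h2).
- rewrite conn_sym in huv; by apply: connect_trans h1 (connect_trans huv h2).
Qed.

Lemma cc_cons_ge L f : cc L <= cc (f :: L) + 1.
Proof.
case: (boolP [exists x, exists y, (x != y) && (f == [set x; y])]).
  move=> /existsP[u /existsP[v /andP[nuv /eqP ->]]].
  case: (boolP (conn L u v)) => h.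
    by rewrite cc_same // leq_addr.
  by rewrite cc_merge.
move=> hn; have e : cc (f :: L) = cc L.
  apply: cc_eq; apply: eq_connect; apply: gadj_cons_nonedge => x y nxy.
  apply/negP => /eqP e; move/negP: hn; apply; apply/existsP; exists x;
  apply/existsP; exists y; by rewrite nxy e eqxx.
by rewrite e leq_addr.
Qed.

Lemma cc_cat_ge M L : cc L <= cc (M ++ L) + size M.
Proof.
elim: M => [|f M IH] /=; first by rewrite addn0.
have := cc_cons_ge (M ++ L) f; lia.
Qed.

Lemma cc_le1 L : (forall x y, conn L x y) -> cc L <= 1.
Proof.
move=> h; rewrite /cc; apply/card_le1_eqP => C1 C2 /imsetP[a _ ->] /imsetP[b _ ->].
by apply: class_eq.
Qed.

Lemma cc_ge1 L (x0 : V) : 1 <= cc L.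
Proof. by rewrite /cc card_gt0; apply/set0Pn; exists [set y | conn L x0 y]; apply: imset_f. Qed.

Lemma cc_ge2 L x y : ~~ conn L x y -> 2 <= cc L.
Proof.
move=> nxy; rewrite /cc (cardsD1 [set z | conn L x z]) imset_f // add1n ltnS card_gt0.
apply/set0Pn; exists [set z | conn L y z]; rewrite !inE imset_f // andbT.
apply/negP => /eqP/setP/(_ y); rewrite !inE connect0 => /esym h.
by rewrite h in nxy.
Qed.

Lemma conn_nil x y : conn [::] x y -> x = y.
Proof.
move/connectP => [[|z p] /= pth ->] //.
by move: pth => /andP[]; rewrite /gadj in_nil andbF.
Qed.

Lemma cc_nil : cc [::] = #|V|.
Proof.
rewrite /cc /cls.
have -> : [set [set y | conn [::] x y] | x in V] = [set [set x] | x in V].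
  apply: eq_imset => x; apply/setP => y; rewrite !inE.
  apply/idP/idP => [/conn_nil ->//|/eqP ->]; exact: connect0.
rewrite card_imset //; exact: set1_inj.
Qed.

End Conn.

Section SortK.
Variables (T : Type) (leT k : rel T).
Hypothesis HA : forall x y, leT x y -> k x y.
Hypothesis HB : forall x y, ~~ leT x y -> k y x.

Lemma merge_path_k x s1 s2 : path k x s1 -> path k x s2 -> path k x (merge leT s1 s2).
Proof.
elim: s1 s2 x => //= x1 s1 IHs1; elim=> //= x2 s2 IHs2 x /andP[k1 p1] /andP[k2 p2].
case: ifP => le12 /=.
  rewrite k1 /=; apply: IHs1 => //=; by rewrite HA.
rewrite k2 /=; apply: IHs2 => //=; by rewrite HB ?le12.
Qed.

Lemma merge_sorted_k s1 s2 : sorted k s1 -> sorted k s2 -> sorted k (merge leT s1 s2).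
Proof.
case: s1 => [|x1 s1] //=; case: s2 => [|x2 s2] //=.
move=> p1 p2; case: ifP => le12 /=.
  apply: merge_path_k => //=; by rewrite HA.
apply: (merge_path_k (s1 := x1 :: s1)) => //=; by rewrite HB ?le12.
Qed.

Lemma push_sorted_k s ss : sorted k s -> all (sorted k) ss ->
  all (sorted k) (merge_sort_push leT s ss).
Proof.
elim: ss s => [|s2 ss IH] s /= hs //=; first by rewrite hs.
case: s2 => [|x2 s2] /andP[h2 hss] /=; first by rewrite hs.
apply: IH => //; exact: merge_sorted_k.
Qed.

Lemma pop_sorted_k s ss : sorted k s -> all (sorted k) ss ->
  sorted k (merge_sort_pop leT s ss).
Proof.
elim: ss s => [|s2 ss IH] s hs //= /andP[h2 hss].
apply: IH => //; exact: merge_sorted_k.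
Qed.

Lemma sort_sorted_k s : sorted k (sort leT s).
Proof.
rewrite sortE; suff : forall ss, all (sorted k) ss -> sorted k (sort_rec1 leT ss s).
  by apply.
elim: s => [|x s IH] ss hss /=; first exact: pop_sorted_k.
apply: IH; exact: push_sorted_k.
Qed.
End SortK.

Section PE.
Variable V : finType.
Notation conn L := (connect (gadj L)).
Implicit Types (s : seq V).

Lemma pe_cons2 (v w : V) s : path_edges (v :: w :: s) = [set v; w] :: path_edges (w :: s).
Proof. by []. Qed.

Lemma pe_short (v : V) : path_edges [:: v] = [::]. Proof. by []. Qed.

Lemma pe_mem s f : uniq s -> f \in path_edges s ->
  exists x y, [/\ x != y, f = [set x; y], x \in s & y \in s].
Proof.
elim: s => [|v s IH] //; case: s IH => [|w s] IH //.
rewrite pe_cons2 inE => /andP[nv us] /orP[/eqP ->|h].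
  exists v, w; split; rewrite ?inE ?eqxx ?orbT //.
  by apply/negP => /eqP e; move: nv; rewrite e inE eqxx.
have [x [y [nxy -> hx hy]]] := IH us h.
by exists x, y; split; rewrite // inE ?hx ?hy orbT.
Qed.

Lemma pe_uniq s : uniq s -> uniq (path_edges s).
Proof.
elim: s => [|v s IH] //; case: s IH => [|w s] IH //.
move=> /andP[nv us]; have us' : uniq (w :: s) := us.
rewrite pe_cons2 cons_uniq IH // andbT.
apply/negP => /(pe_mem us') [x [y [_ e hx hy]]].
have : v \in [set x; y] by rewrite -e !inE eqxx.
by rewrite !inE => /orP[]/eqP ev; move: nv; rewrite ev ?hx ?hy.
Qed.

Lemma pe_conn s x y : uniq s -> x \in s -> y \in s -> conn (path_edges s) x y.
Proof.
elim: s x y => [|v s IH] x y //; case: s IH => [|w s] IH.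
  by rewrite !inE => _ /eqP -> /eqP ->; exact: connect0.
move=> /andP[nv us0]; have us : uniq (w :: s) := us0.
have sub : forall a b, conn (path_edges (w :: s)) a b -> conn (path_edges (v :: w :: s)) a b.
  by apply: conn_mono => f; rewrite pe_cons2 inE orbC => ->.
have nvw : v != w by apply/negP => /eqP e; move: nv; rewrite e inE eqxx.
have hvw : conn (path_edges (v :: w :: s)) v w.
  by apply: conn_edge => //; rewrite pe_cons2 inE eqxx.
have hv : forall a, a \in w :: s -> conn (path_edges (v :: w :: s)) v a.
  move=> a ha; apply: connect_trans hvw (sub _ _ (IH _ _ us _ ha)).
  by rewrite inE eqxx.
rewrite inE => /orP[/eqP ->|hx]; rewrite inE => /orP[/eqP ->|hy].
- exact: connect0.
- exact: hv.
- by rewrite conn_sym; apply: hv.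
- exact: sub (IH _ _ us hx hy).
Qed.

Lemma pe_csg (e : {set V}) s : uniq s -> s =i e -> conn_simple_graph_on e (path_edges s).
Proof.
move=> us se; split; first exact: pe_uniq.
  apply/allP => f /(pe_mem us) [x [y [nxy -> hx hy]]].
  rewrite /is_edge cards2 nxy /=; apply/subsetP => z; rewrite !inE.
  by move=> /orP[]/eqP ->; rewrite -se.
by move=> x y; rewrite -!se; apply: pe_conn.
Qed.

Lemma G_order_induced (E : seq {set V}) (r : rel V) : induced_by E (G_order E r).
Proof.
exists [seq path_edges (sort r (enum e)) | e : {set V} <- E]; split.
- by rewrite size_map.
- move=> i hi; rewrite (nth_map set0) //; apply: pe_csg.
    by rewrite sort_uniq enum_uniq.
  by move=> z; rewrite mem_sort mem_enum.
- by [].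
Qed.

End PE.

Section HG.
Variable V : finType.
Notation conn L := (connect (gadj L)).
Variable B : seq {set V}.

Definition crossb (f : {set V}) : bool :=
  [exists x, exists y, (f == [set x; y]) && ~~ conn B x y].

Lemma crossbN f x y : ~~ crossb f -> f = [set x; y] -> conn B x y.
Proof.
move=> h e; apply/negPn/negP => n; move/negP: h; apply; apply/existsP; exists x.
by apply/existsP; exists y; rewrite e eqxx n.
Qed.

Lemma crossb2 v w : crossb [set v; w] = ~~ conn B v w.
Proof.
apply/idP/idP; last first.
  by move=> n; apply/existsP; exists v; apply/existsP; exists w; rewrite eqxx n.
move=> /existsP[x /existsP[y /andP[/eqP e n]]].
have [[-> ->]|[-> ->]] := set2_eq e => //.
by rewrite conn_sym.
Qed.

Definition kap (x : V) : nat := enum_rank (root (gadj B) x).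

Lemma kap_eq x y : (kap x == kap y) = conn B x y.
Proof.
rewrite -(root_connect (conn_sym B)) /kap.
apply/eqP/eqP => [h|-> //]; apply: enum_rank_inj; exact: val_inj.
Qed.

Definition rk (x y : V) : bool :=
  (kap x < kap y) || ((kap x == kap y) && (enum_rank x < enum_rank y)).

Lemma rk_sto : strict_total_order rk.
Proof.
split.
- by move=> x; rewrite /rk ltnn eqxx ltnn.
- move=> y x z; rewrite /rk => /orP[h1|/andP[/eqP e1 h1]] /orP[h2|/andP[/eqP e2 h2]].
  + by rewrite (ltn_trans h1 h2).
  + by rewrite -e2 h1.
  + by rewrite e1 h2.
  + by rewrite e1 e2 eqxx (ltn_trans h1 h2) orbT.
- move=> x y nxy; rewrite /rk.
  have ne : (enum_rank x : nat) != enum_rank y.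
    by apply/negP => /eqP/val_inj/enum_rank_inj e; rewrite e eqxx in nxy.
  case: (ltngtP (kap x) (kap y)) => //= _.
  by case: (ltngtP (enum_rank x : nat) (enum_rank y)) => // e; rewrite ?orbT // e eqxx in ne.
Qed.

Definition kle (x y : V) := kap x <= kap y.

Lemma sort_kle s : sorted kle (sort rk s).
Proof.
apply: sort_sorted_k.
- by move=> x y; rewrite /rk /kle => /orP[/ltnW //|/andP[/eqP -> _]].
- move=> x y; rewrite /rk /kle negb_or => /andP[h _]; by rewrite leqNgt.
Qed.

Definition Lp (s : seq V) := filter crossb (path_edges s).

Lemma path_cross (s : seq V) : sorted kle s ->
  cc B = cc (Lp s ++ B) + size (Lp s) /\
  (forall a b, conn (Lp s ++ B) a b -> conn B a b \/
       (kap (head a s) <= kap a /\ kap (head a s) <= kap b)).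
Proof.
elim: s => [|v s IH]; first by rewrite /= addn0; split => // a b; left.
case: s IH => [|w s] IH.
  by move=> _; rewrite /= addn0; split => // a b; left.
move=> /= /andP[hvw hs]; rewrite /kle in hvw; have [IH1 IH2] := IH hs.
have kB : forall a b, conn B a b -> kap a = kap b.
  by move=> a b; rewrite -kap_eq => /eqP.
rewrite /Lp pe_cons2 /=; case: (boolP (crossb [set v; w])) => hc.
  have nB : ~~ conn B v w by rewrite -crossb2.
  have nvw : v != w by apply/negP => /eqP e; rewrite e connect0 in nB.
  have nL : ~~ conn (Lp (w :: s) ++ B) v w.
    apply/negP => /IH2 [h|[h1 h2]]; first by rewrite h in nB.
    have e : kap v = kap w by apply/eqP; rewrite eqn_leq hvw h1.
    by move/eqP: e; rewrite kap_eq (negbTE nB).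
  split.
    have := cc_merge nvw nL; rewrite IH1 /Lp /=; lia.
  move=> a b /(conn_cons_split nvw) [h|[h1 h2]|[h1 h2]].
  - case: (IH2 _ _ h) => [|[h1 h2]]; first by left.
    by right; simpl in *; split; lia.
  - right; simpl.
    case: (IH2 _ _ h1) => [/kB e1|[e1 e1']]; case: (IH2 _ _ h2) => [/kB e2|[e2 e2']];
      simpl in *; split; lia.
  - right; simpl.
    case: (IH2 _ _ h1) => [/kB e1|[e1 e1']]; case: (IH2 _ _ h2) => [/kB e2|[e2 e2']];
      simpl in *; split; lia.
split; first exact: IH1.
move=> a b /IH2 [h|[h1 h2]]; first by left.
by right; simpl in *; split; lia.
Qed.

Lemma conn_to_cross L a b : conn L a b -> conn (filter crossb L ++ B) a b.
Proof.
apply: connect_sub => u w /andP[nuw h].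
case: (boolP (crossb [set u; w])) => hc.
  by apply: conn_edge => //; rewrite mem_cat mem_filter hc h.
by apply: conn_mono (crossbN hc (erefl _)) => f; rewrite mem_cat orbC => ->.
Qed.

Lemma tree_cross T : connected_on setT T -> cc B <= count crossb T + 1.
Proof.
move=> hT; have h1 := cc_cat_ge (filter crossb T) B.
have h2 : cc (filter crossb T ++ B) <= 1.
  apply: cc_le1 => x y; apply: conn_to_cross; apply: hT; exact: in_setT.
rewrite size_filter in h1; lia.
Qed.

Lemma pe_mem2 (s : seq V) u w : uniq s -> [set u; w] \in path_edges s -> u \in s /\ w \in s.
Proof.
move=> us /(pe_mem us) [x [y [_ e hx hy]]].
have hu : u \in [set x; y] by rewrite -e !inE eqxx.
have hw : w \in [set x; y] by rewrite -e !inE eqxx orbT.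
by move: hu hw; rewrite !inE => /orP[]/eqP -> /orP[]/eqP ->.
Qed.

Definition pathof (e : {set V}) := path_edges (sort rk (enum e)).

Lemma edge_cross e F0 : conn_simple_graph_on e F0 ->
  count crossb (pathof e) <= count crossb F0.
Proof.
move=> [_ _ hc]; rewrite /pathof; set s := sort rk (enum e).
have us : uniq s by rewrite sort_uniq enum_uniq.
have [h1 _] := path_cross (sort_kle (enum e)); rewrite -/s in h1.
have h2 := cc_cat_ge (filter crossb F0) B.
have h3 : cc (filter crossb F0 ++ B) <= cc (Lp s ++ B).
  apply: cc_sub; apply: connect_sub => u w /andP[nuw].
  rewrite mem_cat => /orP[h|h]; last first.
    by apply: conn_mono (conn_edge nuw h) => f; rewrite mem_cat orbC => ->.
  move: h; rewrite mem_filter => /andP[_ /(pe_mem2 us) [hu hw]].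
  apply: conn_to_cross; apply: hc; by rewrite -(mem_enum (mem e)) -(mem_sort rk).
have hs : size (Lp s) = count crossb (path_edges s) by rewrite /Lp size_filter.
rewrite size_filter in h2; lia.
Qed.

Variables (E : seq {set V}) (tau : nat).
Hypothesis Hall : forall r : rel V, strict_total_order r ->
     has_disjoint_spanning_trees tau (G_order E r).

Lemma sum_le (Es : seq (seq {set V})) : size Es = size E ->
  (forall i, i < size E -> count crossb (pathof (nth set0 E i)) <= count crossb (nth [::] Es i)) ->
  sumn [seq count crossb (pathof e) | e <- E] <= sumn [seq count crossb F | F <- Es].
Proof.
elim: E Es => [|e E' IH] [|F Es] //= [hs] h.
apply: leq_add; first exact: (h 0).
apply: IH => // i hi; exact: (h i.+1).
Qed.

Lemma trees_sum (Ts : seq (seq {set V})) :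
  (forall T, T \in Ts -> spanning_tree T) ->
  size Ts * cc B <= sumn [seq count crossb T | T <- Ts] + size Ts.
Proof.
elim: Ts => [|T Ts IH] //= h.
have [_ hT _] := h T (mem_head _ _).
have := tree_cross hT; have := IH (fun T' hT' => h T' ((mem_behead (s := T :: Ts) hT'))).
rewrite mulSn; lia.
Qed.

Lemma HG_bound G : induced_by E G -> tau * cc B <= count crossb G + tau.
Proof.
move=> [Es [hsz hcsg hperm]].
have [Ts [hTs hsp [rest hrest]]] := Hall rk_sto.
have e1 := permP hrest crossb.
rewrite count_cat (count_flatten Ts) in e1.
have h1 := trees_sum hsp; rewrite hTs in h1.
have e2 := permP hperm crossb; rewrite count_flatten in e2.
have h3 : count crossb (G_order E rk) <= count crossb G.
  rewrite e2 /G_order count_flatten -map_comp.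
  apply: sum_le => // i hi; apply: edge_cross; exact: hcsg.
have h4 : sumn [seq count crossb T | T <- Ts] <= count crossb (G_order E rk) by rewrite e1 leq_addr.
lia.
Qed.

End HG.

Section Paths.
Variable V : finType.

Lemma mem_zip_cons (x : V) p u w : (u, w) \in zip (x :: p) p -> u \in x :: p /\ w \in p.
Proof.
elim: p x => [|z p IH] x //=; rewrite inE => /orP[/eqP [-> ->]|/IH [h1 h2]].
  by rewrite !inE !eqxx.
by split; rewrite inE ?h1 ?h2 orbT.
Qed.

Lemma path_zipE (e : rel V) x p : path e x p = all (fun q => e q.1 q.2) (zip (x :: p) p).
Proof. by elim: p x => [|z p IH] x //=; rewrite IH. Qed.

Lemma path_sub_conn (e e' : rel V) z p :
  path e z p -> (forall a c, a \in z :: p -> c \in z :: p -> e a c -> e' a c) ->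
  connect e' z (last z p).
Proof.
elim: p z => [|y p IH] z /=; first by move=> _ _; exact: connect0.
move=> /andP[ezy pth] h.
apply: connect_trans (connect1 (h _ _ _ _ ezy)) _; rewrite ?inE ?eqxx ?orbT //.
apply: IH => // a c ha hc; apply: h; by rewrite inE ?ha ?hc orbT.
Qed.

Lemma spath (e : rel V) p x : path e x p -> uniq (x :: p) ->
  forall u w, (u, w) \in zip (x :: p) p ->
  forall e' : rel V, (forall a c, e a c -> [set a; c] != [set u; w] -> e' a c) ->
  connect e' x u /\ connect e' w (last x p).
Proof.
elim: p x => [|z p IH] x //= /andP[exz pth] /andP[nx up] u w.
rewrite inE => /orP[/eqP [-> ->]|hz] e' h.
  split; first exact: connect0.
  apply: path_sub_conn pth _ => a c ha hc eac; apply: (h a c eac).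
  apply/negP => /eqP ee.
  have : x \in [set a; c] by rewrite ee !inE eqxx.
  by rewrite !inE => /orP[]/eqP hu; move: nx; rewrite hu ?ha ?hc.
have [hu hw] := mem_zip_cons hz.
have [h1 h2] := IH _ pth up _ _ hz _ h.
split => //; apply: connect_trans h1; apply: connect1; apply: (h x z exz).
apply/negP => /eqP ee.
have : x \in [set u; w] by rewrite -ee !inE eqxx.
rewrite !inE => /orP[]/eqP hx; move: nx; rewrite hx ?hu //.
by rewrite inE hw orbT.
Qed.
End Paths.

Section Forest.
Variable V : finType.
Notation conn L := (connect (gadj L)).
Variables (m : nat) (g : 'I_m -> {set V}).
Hypothesis g2 : forall j, #|g j| == 2.

Definition ELf (P : pred 'I_m) : seq {set V} := [seq g j | j <- enum 'I_m & P j].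

Lemma mem_EL (P : pred 'I_m) f : reflect (exists2 j, P j & f = g j) (f \in ELf P).
Proof.
apply: (iffP mapP) => [[j]|[j hj ->]].
  by rewrite mem_filter mem_enum andbT => hj ->; exists j.
by exists j; rewrite // mem_filter mem_enum hj.
Qed.

Lemma EL_mono (P Q : pred 'I_m) : (forall j, P j -> Q j) -> {subset ELf P <= ELf Q}.
Proof. by move=> h f /mem_EL [j /h hj ->]; apply/mem_EL; exists j. Qed.

Lemma conn_EL_mono (P Q : pred 'I_m) : (forall j, P j -> Q j) ->
  forall a b, conn (ELf P) a b -> conn (ELf Q) a b.
Proof. by move=> h; apply: conn_mono; apply: EL_mono. Qed.

Definition acyc (P : pred 'I_m) : Prop :=
  forall j, P j -> forall x y, x != y -> g j = [set x; y] ->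
    ~~ conn (ELf (fun j' => P j' && (j' != j))) x y.

Lemma acyc_sub (P Q : pred 'I_m) : acyc P -> (forall j, Q j -> P j) -> acyc Q.
Proof.
move=> hP hQ j qj x y nxy ej; apply/negP => c.
move/negP: (hP j (hQ _ qj) x y nxy ej); apply; move: c; apply: conn_EL_mono.
by move=> j' /andP[/hQ -> ->].
Qed.

Lemma acyc_add (P : pred 'I_m) j0 x y : acyc P -> ~~ P j0 -> x != y ->
  g j0 = [set x; y] -> ~~ conn (ELf P) x y -> acyc (fun j => (j == j0) || P j).
Proof.
move=> hP nP0 nxy e0 nc j hj a b nab ej; apply/negP => hab.
case: (eqVneq j j0) => [ejj|njj].
  subst j; move: hab; apply/negP.
  have [[-> ->]|[-> ->]] := set2_eq (etrans (esym ej) e0).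
    apply/negP => h; move/negP: nc; apply; move: h; apply: conn_EL_mono.
    by move=> j' /andP[/orP[/eqP -> /negP//|//] _].
  apply/negP => h; move/negP: nc; apply; rewrite conn_sym; move: h; apply: conn_EL_mono.
  by move=> j' /andP[/orP[/eqP -> /negP//|//] _].
have Pj : P j by move: hj; rewrite (negbTE njj).
set P' := fun j' => P j' && (j' != j).
have hsub : forall c d, conn (ELf (fun j' => ((j' == j0) || P j') && (j' != j))) c d ->
    conn ([set x; y] :: ELf P') c d.
  apply: conn_mono => f /mem_EL [j' /andP[/orP[/eqP ->|pj'] nj'] ->].
    by rewrite -e0 mem_head.
  by rewrite inE; apply/orP; right; apply/mem_EL; exists j' => //; rewrite /P' pj'.
have hP'P : forall c d, conn (ELf P') c d -> conn (ELf P) c d.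
  by apply: conn_EL_mono => j' /andP[].
have eab : conn (ELf P) a b by apply: conn_edge => //; apply/mem_EL; exists j.
have nP' := hP j Pj a b nab ej.
case: (conn_cons_split nxy (hsub _ _ hab)) => [h|[h1 h2]|[h1 h2]].
- by rewrite h in nP'.
- move/negP: nc; apply.
  rewrite conn_sym in h1; rewrite conn_sym in h2.
  apply: connect_trans (hP'P _ _ h1) _.
  exact: connect_trans eab (hP'P _ _ h2).
- move/negP: nc; apply.
  apply: connect_trans (hP'P _ _ h2) _; rewrite conn_sym in eab.
  exact: connect_trans eab (hP'P _ _ h1).
Qed.

Lemma forest_cc_seq (s : seq 'I_m) : uniq s ->
  (forall j, j \in s -> forall x y, x != y -> g j = [set x; y] ->
      ~~ conn (map g (rem j s)) x y) ->
  cc (map g s) + size s = cc ([::] : seq {set V}).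
Proof.
elim: s => [|j s IH] /=; first by rewrite addn0.
move=> /andP[nj us] h.
have [x [y [nxy exy]]] := cards2P _ (g2 j).
have nc : ~~ conn (map g s) x y.
  by have := h j (mem_head _ _) x y nxy exy; rewrite /= eqxx.
have hm : cc ([set x; y] :: map g s) + 1 = cc (map g s) := cc_merge nxy nc.
suff H : cc (map g s) + size s = cc ([::] : seq {set V}).
  rewrite exy; lia.
apply: IH => // j' hj' a b nab e'; apply/negP => c.
move/negP: (h j' (mem_behead (s := j :: s) hj') a b nab e'); apply.
move: c; apply: conn_mono => f hf /=.
have -> : (j == j') = false by apply/negP => /eqP e; rewrite e hj' in nj.
by rewrite /= inE hf orbT.
Qed.

Lemma forest_cc (P : pred 'I_m) : acyc P -> cc (ELf P) + count P (enum 'I_m) = #|V|.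
Proof.
move=> hP; rewrite -size_filter -cc_nil; apply: forest_cc_seq.
  by apply: filter_uniq; apply: enum_uniq.
move=> j; rewrite mem_filter mem_enum andbT => pj x y nxy e.
have := hP j pj x y nxy e; apply: contra.
apply: conn_mono => f hf; apply/mem_EL.
move/mapP: hf => [j' hj' ->]; exists j' => //.
move: hj'; rewrite mem_rem_uniq; last by rewrite filter_uniq // enum_uniq.
rewrite !inE mem_filter mem_enum andbT.
by case/andP => -> ->.
Qed.

End Forest.

Lemma ex_max_prop (T : finType) (P : T -> Prop) (f : T -> nat) x0 :
  P x0 -> exists x, P x /\ forall y, P y -> f y <= f x.
Proof.
move=> P0; apply: NNPP => hn.
have up : forall x, P x -> exists y, P y /\ f x < f y.
  move=> x Px; apply: NNPP => h2; apply: hn; exists x; split => // y Py.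
  rewrite leqNgt; apply/negP => lt; apply: h2; by exists y.
have : forall n, exists y, P y /\ n <= f y.
  elim=> [|n [y [Py hy]]]; first by exists x0.
  have [z [Pz hz]] := up y Py; exists z; split => //; exact: leq_ltn_trans hy hz.
move/(_ (\max_(y : T) f y).+1) => [y [_ hy]].
by move: hy; rewrite ltnNge leq_bigmax.
Qed.

Section Main.
Variable V : finType.
Notation conn L := (connect (gadj L)).
Variables (m k : nat) (g : 'I_m -> {set V}).
Hypothesis g2 : forall j, #|g j| == 2.

Notation EL := (ELf g).
Notation acyc := (acyc g).

Definition FT := {ffun 'I_m -> option 'I_k}.
Definition Fp (F : FT) (i : 'I_k) : pred 'I_m := fun j => F j == Some i.
Definition valid (F : FT) := forall i, acyc (Fp F i).
Definition sz (F : FT) := #|[set j | F j != None]|.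
Definition upd (F : FT) a b i : FT :=
  [ffun j => if j == a then Some i else if j == b then None else F j].
Definition addF (F : FT) a i : FT := [ffun j => if j == a then Some i else F j].
Implicit Types (X Y F : FT) (a b j : 'I_m) (i : 'I_k).

Lemma acyc_ext (P Q : pred 'I_m) : P =1 Q -> acyc P -> acyc Q.
Proof. by move=> e hP; apply: acyc_sub hP _ => j; rewrite e. Qed.

Lemma sz_upd X a b i : X a = None -> X b = Some i -> sz (upd X a b i) = sz X.
Proof.
move=> ha hb; have nab : a != b by apply/negP => /eqP e; rewrite e hb in ha.
rewrite /sz; have -> : [set j | upd X a b i j != None] = a |: ([set j | X j != None] :\ b).
  apply/setP => j; rewrite !inE ffunE.
  case: (eqVneq j a) => [->|nja] //=; case: (eqVneq j b) => [->|njb] //=.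
rewrite cardsU1 !inE ha eqxx /= (cardsD1 b [set j | X j != None]) !inE hb /=.
by rewrite andbF.
Qed.

Lemma sz_add X a i : X a = None -> sz (addF X a i) = (sz X).+1.
Proof.
move=> ha; rewrite /sz.
have -> : [set j | addF X a i j != None] = a |: [set j | X j != None].
  apply/setP => j; rewrite !inE ffunE; by case: (eqVneq j a).
by rewrite cardsU1 !inE ha eqxx.
Qed.

Lemma Fp_upd_ne X a b i i' : X a = None -> X b = Some i -> i' != i ->
  Fp (upd X a b i) i' =1 Fp X i'.
Proof.
move=> ha hb ni j; rewrite /Fp ffunE.
case: (eqVneq j a) => [->|_].
  by rewrite ha; case: eqP => [[e]|//]; rewrite e eqxx in ni.
case: (eqVneq j b) => [->|_] //; rewrite hb.
by case: (Some i =P Some i') => [[e]|//]; rewrite e eqxx in ni.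
Qed.

Lemma Fp_upd_eq X a b i : X a = None -> X b = Some i ->
  Fp (upd X a b i) i =1 (fun j => (j == a) || (Fp X i j && (j != b))).
Proof.
move=> ha hb j; rewrite /Fp ffunE.
case: (eqVneq j a) => [->|_] //=; first by rewrite eqxx.
by case: (eqVneq j b) => [->|_] //=; rewrite ?andbF ?andbT.
Qed.

Lemma Fp_add_ne X a i i' : X a = None -> i' != i -> Fp (addF X a i) i' =1 Fp X i'.
Proof.
move=> ha ni j; rewrite /Fp ffunE.
case: (eqVneq j a) => [->|_] //; rewrite ha.
by case: eqP => [[e]|//]; rewrite e eqxx in ni.
Qed.

Lemma Fp_add_eq X a i : Fp (addF X a i) i =1 (fun j => (j == a) || Fp X i j).
Proof. move=> j; rewrite /Fp ffunE; by case: (eqVneq j a) => [->|_] //=; rewrite eqxx. Qed.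

Lemma ends j : exists x y, x != y /\ g j = [set x; y].
Proof. exact/cards2P/g2. Qed.

Variable Fm : FT.
Hypothesis Fm_valid : valid Fm.
Hypothesis Fm_max : forall F, valid F -> sz F <= sz Fm.

Definition step (X Y : FT) := exists a b i,
  [/\ X a = None, X b = Some i, Y = upd X a b i & valid Y].

Inductive reach : FT -> Prop :=
| r0 : reach Fm
| rS X Y : reach X -> step X Y -> reach Y.

Lemma reach_valid X : reach X -> valid X /\ sz X = sz Fm.
Proof.
elim=> [|X0 Y _ [vX sX] [a [b [i [ha hb -> vY]]]]]; first by [].
split => //; by rewrite sz_upd.
Qed.

Lemma none_conn X j x y : reach X -> X j = None -> x != y -> g j = [set x; y] ->
  forall i, conn (EL (Fp X i)) x y.
Proof.
move=> rX hj nxy ej i; apply/negPn/negP => nc.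
have [vX sX] := reach_valid rX.
have vY : valid (addF X j i).
  move=> i'; case: (eqVneq i' i) => [->|ni]; last first.
    exact: acyc_ext (fun z => esym (Fp_add_ne hj ni z)) (vX i').
  apply: (acyc_ext (fun z => esym (Fp_add_eq X j i z))).
  apply: (acyc_add (x := x) (y := y)) => //.
  by apply/eqP => e; rewrite e in hj.
have := Fm_max vY; rewrite sz_add // sX ltnn.
by [].
Qed.

Definition E0 j := exists X, reach X /\ X j = None.
Definition E0b j : bool := if excluded_middle_informative (E0 j) then true else false.
Lemma E0bP j : reflect (E0 j) (E0b j).
Proof. by rewrite /E0b; case: excluded_middle_informative => h; constructor. Qed.

Definition QE (X : FT) i : pred 'I_m := fun j => Fp X i j && E0b j.

Lemma path_E0 X j x y : reach X -> X j = None -> x != y -> g j = [set x; y] ->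
  forall i, conn (EL (QE X i)) x y.
Proof.
move=> rX hj nxy ej i.
have [vX sX] := reach_valid rX.
have := none_conn rX hj nxy ej i => /connectP [p pth ey].
move: ey; case: (shortenP pth) => p' pth' up' _ ey.
apply/connectP; exists p' => //.
rewrite path_zipE; apply/allP => [[u w]] hz /=.
have := pth'; rewrite path_zipE => /allP /(_ _ hz) /= /andP[nuw].
move=> /mem_EL [b pb eb].
apply/andP; split => //; apply/mem_EL; exists b => //; rewrite /QE pb /=.
apply/E0bP.
set P := fun j' => Fp X i j' && (j' != b).
have nc : ~~ conn (EL P) x y.
  have hsp : forall a c : V, gadj (EL (Fp X i)) a c -> [set a; c] != [set u; w] ->
      gadj (EL P) a c.
    move=> a c /andP[nac /mem_EL [b' pb' eb']] ne; rewrite /gadj nac /=.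
    apply/mem_EL; exists b' => //; rewrite /P pb' /=.
    by apply/negP => /eqP ebb; move: ne; rewrite eb' ebb eb eqxx.
  have [h1 h2] := spath pth' up' hz hsp.
  apply/negP => hxy.
  have := vX i b pb u w nuw (esym eb); rewrite -/P => /negP; apply.
  rewrite conn_sym in h1; apply: connect_trans h1 _.
  apply: connect_trans hxy _; by rewrite conn_sym ey.
have hb : X b = Some i by apply/eqP.
have nbj : b != j by apply/negP => /eqP e; rewrite e hj in hb.
have vY : valid (upd X j b i).
  move=> i'; case: (eqVneq i' i) => [->|ni]; last first.
    exact: acyc_ext (fun z => esym (Fp_upd_ne hj hb ni z)) (vX i').
  apply: (acyc_ext (fun z => esym (Fp_upd_eq hj hb z))).
  apply: (acyc_add (x := x) (y := y)) => //.
  - apply: acyc_sub (vX i) _ => j' /andP[] //.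
  - by rewrite /P; apply/negP => /andP[/eqP e _]; rewrite e in hj.
have rY : reach (upd X j b i).
  apply: rS rX _; exists j, b, i; split => //.
exists (upd X j b i); split => //.
by rewrite ffunE (negbTE nbj) eqxx.
Qed.


Lemma step_conn X Y : step X Y -> reach Y ->
  forall i' (u w : V), conn (EL (QE X i')) u w -> conn (EL (QE Y i')) u w.
Proof.
move=> [a [b [i [ha hb eY vY]]]] rY i'; apply: connect_sub => u w.
move=> /andP[nuw /mem_EL [c /andP[pc ec] euc]].
have nab : b != a by apply/negP => /eqP e; rewrite e ha in hb.
case: (eqVneq c b) => [ecb|ncb].
  subst c.
  have Yb : Y b = None by rewrite eY ffunE (negbTE nab) eqxx.
  exact: path_E0 rY Yb nuw (esym euc) i'.
have nca : c != a by apply/negP => /eqP e; move: pc; rewrite /Fp e ha.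
apply: conn_edge => //; apply/mem_EL; exists c => //.
by rewrite /QE /Fp eY ffunE (negbTE nca) (negbTE ncb) -/(Fp X i' c) pc ec.
Qed.

Lemma reach_conn X : reach X ->
  forall i' (u w : V), conn (EL (QE X i')) u w -> conn (EL (QE Fm i')) u w.
Proof.
elim=> [//|X0 Y rX IH [a [b [i [ha hb eY vY]]]]] i' u w h.
have nab : b != a by apply/negP => /eqP e; rewrite e ha in hb.
have rY : reach Y by apply: rS rX _; exists a, b, i.
have st : step Y X0.
  exists b, a, i; split.
  - by rewrite eY ffunE (negbTE nab) eqxx.
  - by rewrite eY ffunE eqxx.
  - apply/ffunP => j; rewrite eY !ffunE.
    case: (eqVneq j b) => [->|njb]; first by [].
    by case: (eqVneq j a) => [->|nja].


  - exact: (reach_valid rX).1.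
apply: IH; exact: step_conn st rX _ _ _ h.
Qed.

Lemma E0_conn j (u w : V) : E0b j -> u != w -> g j = [set u; w] ->
  forall i, conn (EL (QE Fm i)) u w.
Proof.
move=> /E0bP [X [rX hX]] nuw e i; apply: (reach_conn rX).
exact: path_E0 rX hX nuw e i.
Qed.

Lemma QE_B i : conn (EL (QE Fm i)) =2 conn (EL E0b).
Proof.
move=> u w; apply/idP/idP.
  by apply: conn_EL_mono => j /andP[].
apply: connect_sub => a c /andP[nac /mem_EL [j hj ej]].
exact: E0_conn hj nac (esym ej) i.
Qed.

Lemma count_split (T : Type) (a b : pred T) (s : seq T) :
  count (fun z : T => a z && b z) s + count (fun z : T => a z && ~~ b z) s = count a s.
Proof.
elim: s => [|z s IH] //=; rewrite -IH.
by case: (a z); case: (b z) => /=; lia.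
Qed.

Lemma sum_part (F : FT) (a : pred 'I_m) s :
  \sum_(i < k) count (fun j => a j && (F j == Some i)) s = count (fun j => a j && (F j != None)) s.
Proof.
elim: s => [|z s IH] /=; first by rewrite big1.
rewrite big_split /= IH; congr (_ + _).
case: (F z) => [i0|] /=; last by rewrite andbF big1 // => i _; rewrite andbF.
rewrite (bigD1 i0) //= eqxx big1 ?addn0 //.
move=> i ni; case: (a z) => //=.
by case: eqP => // -[e]; rewrite e eqxx in ni.
Qed.

Notation Bl := (EL E0b).

Lemma NW_bad i0 (x y : V) : ~~ conn (EL (Fp Fm i0)) x y ->
  count (fun j => crossb Bl (g j)) (enum 'I_m) + k + 1 <= k * cc Bl.
Proof.
move=> nc0.
have ha : forall i, count (fun j => ~~ E0b j && (Fm j == Some i)) (enum 'I_m)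
                   + cc (EL (Fp Fm i)) = cc Bl.
  move=> i.
  have vi : acyc (Fp Fm i) := @Fm_valid i.
  have vq : acyc (QE Fm i) by apply: acyc_sub vi _ => j /andP[].
  have h1 := forest_cc g2 vi.
  have h2 := forest_cc g2 vq.
  have h3 := count_split (Fp Fm i) E0b (enum 'I_m).
  have e1 : cc (EL (QE Fm i)) = cc Bl by apply: cc_eq; apply: QE_B.
  have e2 : count (fun j => ~~ E0b j && (Fm j == Some i)) (enum 'I_m) =
            count (fun j => Fp Fm i j && ~~ E0b j) (enum 'I_m).
    by apply: eq_count => j; rewrite andbC.
  rewrite /QE in e1 h2; lia.
set N := count (fun j => ~~ E0b j) (enum 'I_m).
have hN : N = \sum_(i < k) count (fun j => ~~ E0b j && (Fm j == Some i)) (enum 'I_m).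
  rewrite sum_part /N; apply: eq_count => j.
  case: (boolP (E0b j)) => //= hj; apply/esym/negP => /eqP hF.
  by move/negP: hj; apply; apply/E0bP; exists Fm; split => //; exact: r0.
have hcross : count (fun j => crossb Bl (g j)) (enum 'I_m) <= N.
  apply: sub_count => j /existsP [u /existsP [w /andP [/eqP e nc]]] /=.
  apply/negP => hj; move/negP: nc; apply.
  case: (eqVneq u w) => [->|nuw]; first exact: connect0.
  by apply: conn_edge => //; apply/mem_EL; exists j.
have hsum : \sum_(i < k) (count (fun j => ~~ E0b j && (Fm j == Some i)) (enum 'I_m)
                   + cc (EL (Fp Fm i))) = k * cc Bl.
  rewrite (eq_bigr (fun _ => cc Bl)); last by move=> i _; exact: ha.
  by rewrite sum_nat_const card_ord.
rewrite big_split /= -hN in hsum.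
have hk : 0 < k := leq_ltn_trans (leq0n _) (ltn_ord i0).
have s1 : \sum_(i < k) 1 = 1 + \sum_(i < k | i != i0) 1 by rewrite (bigD1 i0).
have s2 : \sum_(i < k) cc (EL (Fp Fm i)) = cc (EL (Fp Fm i0)) + \sum_(i < k | i != i0) cc (EL (Fp Fm i)).
  by rewrite (bigD1 i0).
have s3 : \sum_(i < k | i != i0) 1 <= \sum_(i < k | i != i0) cc (EL (Fp Fm i)).
  by apply: leq_sum => i _; exact: cc_ge1 x.
have s4 : \sum_(i < k) 1 = k by rewrite sum_nat_const card_ord muln1.
have s5 := cc_ge2 nc0.
move: hcross hsum s1 s2 s3 s4 s5.
set S := \sum_(i < k) cc (EL (Fp Fm i)).
set R := \sum_(i < k | i != i0) cc (EL (Fp Fm i)).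
set T1 := \sum_(i < k | i != i0) 1.
set O := \sum_(i < k) 1.
set c0 := cc (EL (Fp Fm i0)).
set p := cc Bl.
set C := count _ _.
clearbody S R T1 O c0 p C N.
move=> *; nia.
Qed.

Lemma take_drop_mem (T : eqType) (s : seq T) t x0 z : uniq s -> t < size s ->
  z \in take t s ++ drop t.+1 s -> z \in s /\ z != nth x0 s t.
Proof.
move=> us ht hz.
have es : s = take t s ++ nth x0 s t :: drop t.+1 s by rewrite -drop_nth // cat_take_drop.
have hz' : z \in s by rewrite {1}es mem_cat inE; move: hz; rewrite mem_cat => /orP[] ->; rewrite ?orbT.
split => //.
move: us; rewrite {1}es cat_uniq => /and3P [_ hh hu].
move: hu; rewrite cons_uniq => /andP[nd _].
apply/negP => /eqP ez; subst z; move: hz; rewrite mem_cat => /orP[hz|hz].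
  move/negP: hh; apply; apply/hasP; exists (nth x0 s t); first by rewrite inE eqxx.
  by [].

by rewrite hz in nd.
Qed.

Lemma NW_good : (forall i (x y : V), conn (EL (Fp Fm i)) x y) ->
  has_disjoint_spanning_trees k [seq g j | j <- enum 'I_m].
Proof.
move=> hconn.
exists [seq EL (Fp Fm i) | i <- enum 'I_k]; split.
- by rewrite size_map size_enum_ord.
- move=> T /mapP [i _ ->]; split.
  + apply/allP => f /mem_EL [j _ ->]; exact: g2.
  + by move=> x y _ _; apply: hconn.
  + move=> t; rewrite /ELf; set s := [seq j <- enum 'I_m | Fp Fm i j].
    have us : uniq s by rewrite filter_uniq // enum_uniq.
    rewrite size_map => ht.
    have [j1 _] : exists j1 : 'I_m, true by case: (s) ht => [|j1 ?] //; exists j1.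
    set jt := nth j1 s t.
    have hj : jt \in s by apply: mem_nth.
    have pjt : Fp Fm i jt by move: hj; rewrite /s mem_filter => /andP[].
    have [x [y [nxy ej]]] := ends jt.
    move=> hc; have := @Fm_valid i jt pjt x y nxy ej; apply/negP/negPn.
    have := hc x y (in_setT _) (in_setT _); apply: conn_mono => f.
    rewrite -map_take -map_drop -map_cat => /mapP [j' hj' ->].
    have [h1 h2] := take_drop_mem j1 us ht hj'.
    apply/mem_EL; exists j' => //; rewrite h2 andbT.
    by move: h1; rewrite /s mem_filter => /andP[].
- exists (EL (fun j => Fm j == None)).
  apply/permP => a.
  have c1 : count a [seq g j | j <- enum 'I_m] = count (preim g a) (enum 'I_m).
    exact: count_map.
  have c2 : forall P : pred 'I_m, count a (EL P) = count (fun j => preim g a j && P j) (enum 'I_m).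
    by move=> P; rewrite /ELf count_map count_filter.
  have c3 : count a (flatten [seq EL (Fp Fm i) | i <- enum 'I_k]) =
     \sum_(i < k) count (fun j => preim g a j && (Fm j == Some i)) (enum 'I_m).
    rewrite count_flatten sumnE !big_map; apply: eq_bigr => i _; exact: c2.
  rewrite count_cat c1 c3 c2 sum_part -(count_split (preim g a) (fun j => Fm j != None)).
  congr (_ + _); apply: eq_count => j; by rewrite /= negbK.
Qed.

End Main.

Lemma G_map (V : finType) (G : seq {set V}) :
  [seq nth set0 G (j : 'I_(size G)) | j <- enum 'I_(size G)] = G.
Proof.
rewrite -[RHS](mkseq_nth set0) /mkseq -val_enum_ord -map_comp.
by apply: eq_map.
Qed.

Lemma induced_edges (V : finType) (E G : seq {set V}) : induced_by E G ->
  forall f, f \in G -> #|f| == 2.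
Proof.
move=> [Es [hs hc hp]] f hf.
have : f \in flatten Es by rewrite -(perm_mem hp).
move=> /flattenP [F hF hfF].
move: hF => /(nthP [::]) [i hi eF].
rewrite hs in hi; have [_ hall _] := hc i hi.
by move/allP: hall => /(_ f); rewrite eF => /(_ hfF) /andP[].
Qed.

Theorem mainTheorem11 (V : finType) (E : seq {set V}) (tau : nat) :
  0 < tau -> all (fun e => e != set0) E ->
  inherently_connected tau E <->
  (forall r : rel V, strict_total_order r ->
     has_disjoint_spanning_trees tau (G_order E r)).
Proof.
move=> _ _; split.
  move=> hinh r _; apply: hinh; exact: G_order_induced.
move=> Hall G hG.
set m := size G.
set g : 'I_m -> {set V} := fun j => nth set0 G j.
have g2 : forall j, #|g j| == 2.
  move=> j; apply: (induced_edges hG); exact: mem_nth.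
have v0 : valid g ([ffun => None] : FT m tau).
  move=> i j; rewrite /Fp ffunE //.
have [Fm [vFm mFm]] := ex_max_prop (sz (k := tau) (m := m)) v0.
have eG : [seq g j | j <- enum 'I_m] = G by exact: G_map.
case: (classic (forall i (x y : V), connect (gadj (ELf g (Fp Fm i))) x y)) => hc.
  by rewrite -eG; apply: (NW_good g2 vFm hc).
have [i0 /not_all_ex_not [x /not_all_ex_not [y /negP nc]]] := not_all_ex_not _ _ hc.
have h1 := NW_bad g2 vFm mFm nc.
have h2 := HG_bound (ELf g (E0b g Fm)) Hall hG.
have e3 : count (crossb (ELf g (E0b g Fm))) G =
          count (fun j => crossb (ELf g (E0b g Fm)) (g j)) (enum 'I_m).
  by rewrite -{1}eG count_map.
move: h1 h2; rewrite e3.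
set C := count _ _; set p := cc _.
clearbody C p; nia.
Qed.
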